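(* Let $m\in[\frac n4..\frac n2-1]$ be an integer and $\delta\in(0,2)$. Let $x$ be a random bit string in $\{0,1\}^n$ such that $\mathrm{DLB}(x)=2m$ and such that the bits $x_i$, $i\in[2m+3..n]$, are mutually independent, independent of the other bits, and uniformly distributed in $\{0,1\}$. Let $y$ be generated from $x$ by a unary unbiased variation operator $V$, and let $Y=(\mathrm{HLB}_\delta(y)-\mathrm{HLB}_\delta(x))\mathbb{1}_{\mathrm{DLB}(y)\ge\mathrm{DLB}(x)}$. Then $E[Y]\le\frac{2\delta}{n}$.
   Context: Let $n$ be an even positive integer. For $x\in\{0,1\}^n$ consider the blocks $(x_{2\ell+1},x_{2\ell+2})$, $\ell=0,\dots,\frac n2-1$. If $x\neq(1,\dots,1)$, let $m$ be the smallest $\ell$ with $x_{2\ell+1}\neq 1$ or $x_{2\ell+2}\neq 1$, and define $\mathrm{DLB}(x)=2m+1$ if $x_{2m+1}+x_{2m+2}=0$ and $\mathrm{DLB}(x)=2m$ if $x_{2m+1}+x_{2m+2}=1$; set $\mathrm{DLB}(1,\dots,1)=n$. For $\delta\in(0,2)$, $\mathrm{HLB}_\delta(x)=2m$ if $\mathrm{DLB}(x)=2m+1$, $\mathrm{HLB}_\delta(x)=2m+2-\delta$ if $\mathrm{DLB}(x)=2m$ (for $m\in\{0,\dots,\frac n2-1\}$), and $\mathrm{HLB}_\delta(x)=n$ if $\mathrm{DLB}(x)=n$. A unary unbiased variation operator $V$ assigns to each $x\in\{0,1\}^n$ a probability distribution $V(x)$ on $\{0,1\}^n$ such that for all $x,y,z$,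 $\Pr[y=V(x)]=\Pr[y\oplus z=V(x\oplus z)]$, and for all permutations $\sigma$ of $[1..n]$, $\Pr[y=V(x)]=\Pr[\sigma(y)=V(\sigma(x))]$, where $\sigma(x)=(x_{\sigma(1)},\dots,x_{\sigma(n)})$. *)

(* Defs.v *)
(* Bit strings x in {0,1}^n are {ffun 'I_n -> bool};
   the paper's bit x_k (1-indexed) is x at index k-1 (0-indexed). *)
From mathcomp Require Import all_boot all_order all_algebra fingroup perm.
Set Implicit Arguments. Unset Strict Implicit. Unset Printing Implicit Defensive.
Import Order.TTheory GRing.Theory Num.Theory.

Section Defs.
Variable n : nat.
Notation bits := {ffun 'I_n -> bool}.

(* 0-indexed access by a natural number (false out of range, never used there) *)
Definition bitn (x : bits) (i : nat) : bool :=
  match insub i with Some j => x j | None => false end.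

(* block l (0-indexed) = (x_{2l+1}, x_{2l+2}) = (bitn x (2l), bitn x (2l+1)) *)
Definition blk_ones (x : bits) (l : nat) : bool :=
  bitn x (2 * l) && bitn x (2 * l + 1).

Definition firstm (x : bits) : nat :=
  find (fun l => ~~ blk_ones x l) (iota 0 n./2).

Definition DLB (x : bits) : nat :=
  let m := firstm x in
  if m == n./2 then n
  else if (bitn x (2 * m) + bitn x (2 * m + 1) == 0)%N then (2 * m + 1)%N
  else (2 * m)%N.

Definition HLB {R : numDomainType} (delta : R) (x : bits) : R :=
  let m := firstm x in
  if DLB x == n then (n%:R)%R
  else if DLB x == (2 * m + 1)%N then ((2 * m)%:R)%R
  else ((2 * m + 2)%:R - delta)%R.

Definition xorb_ff (x z : bits) : bits := [ffun i => x i (+) z i].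
Definition permb (s : 'S_n) (x : bits) : bits := [ffun i => x (s i)].

(* V x y = Pr[y = V(x)] *)
Definition unary_unbiased {R : numDomainType} (V : bits -> bits -> R) : Prop :=
  [/\ (forall x y, (0 <= V x y)%R),
      (forall x, (\sum_(y : bits) V x y = 1)%R),
      (forall x y z, V x y = V (xorb_ff x z) (xorb_ff y z)) &
      (forall (s : 'S_n) x y, V x y = V (permb s x) (permb s y))].
End Defs.

(* Main.v *)
Require Import Defs.
From mathcomp Require Import all_boot all_order all_algebra fingroup perm.
From mathcomp Require Import zify.
From mathcomp.algebra_tactics Require Import ring lra.
Set Implicit Arguments. Unset Strict Implicit. Unset Printing Implicit Defensive.
Import Order.TTheory GRing.Theory Num.Theory.

Section Bits.
Variable n : nat.
Local Notation bits := {ffun 'I_n -> bool}.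

Lemma bitn_ord (x : bits) (j : 'I_n) : bitn x j = x j.
Proof. by rewrite /bitn (insubT (fun i => i < n)%N (ltn_ord j)) /=; congr (x _); apply: val_inj. Qed.

Lemma bitn_out (x : bits) p : (n <= p)%N -> bitn x p = false.
Proof. by move=> h; rewrite /bitn insubF // ltnNge h. Qed.

Lemma bitn_xor (x r : bits) p : bitn (xorb_ff x r) p = bitn x p (+) bitn r p.
Proof. by rewrite /bitn; case: insub => [j|] //; rewrite ffunE. Qed.

Lemma bitn_perm (s : 'S_n) (r : bits) (j : 'I_n) : bitn (permb s r) j = r (s j).
Proof. by rewrite bitn_ord ffunE. Qed.

Definition M := n./2.

Lemma firstm_le (x : bits) : (firstm x <= M)%N.
Proof. by rewrite /firstm /M -[X in (_ <= X)%N](size_iota 0 n./2) find_size. Qed.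

Lemma firstm_before (x : bits) l : (l < firstm x)%N -> blk_ones x l.
Proof.
move=> h; have := before_find 0 h.
have hl : (l < n./2)%N by apply: leq_trans h (firstm_le x).
by rewrite nth_iota // add0n => /negbFE.
Qed.

Lemma firstm_at (x : bits) : (firstm x < M)%N -> ~~ blk_ones x (firstm x).
Proof.
move=> h; have : has (fun l => ~~ blk_ones x l) (iota 0 n./2).
  by rewrite has_find size_iota.
move/(nth_find 0); rewrite nth_iota // add0n.
Qed.

Lemma firstm_eq (x : bits) j : (j <= M)%N -> (forall l, (l < j)%N -> blk_ones x l) ->
  ((j < M)%N -> ~~ blk_ones x j) -> firstm x = j.
Proof.
move=> hj hb ha; case: (ltngtP (firstm x) j) => // h.
  have := firstm_at (leq_trans h hj); by rewrite hb.
have := firstm_before h; have := ha (leq_trans h (firstm_le x)); by move/negbTE->.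
Qed.

Definition zb (x : bits) l := (bitn x (2 * l) + bitn x (2 * l + 1) == 0)%N.

Lemma n2M : ~~ odd n -> n = (2 * M)%N.
Proof. by move=> ho; rewrite /M -{1}(odd_double_half n) (negbTE ho) add0n -mul2n. Qed.

Lemma DLB_F (x : bits) : DLB x = if firstm x == M then n
  else if zb x (firstm x) then (2 * firstm x + 1)%N else (2 * firstm x)%N.
Proof. by []. Qed.

Lemma HLB_F (R : numDomainType) (d : R) (x : bits) : ~~ odd n ->
  HLB d x = (if firstm x == M then n%:R
  else if zb x (firstm x) then (2 * firstm x)%N%:R else (2 * firstm x + 2)%N%:R - d)%R.
Proof.
move=> ho; have hn := n2M ho.
rewrite /HLB /DLB /zb /= -/M; case: (firstm x =P M) => [->|hF]; first by rewrite eqxx.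
have hlt : (firstm x < M)%N by rewrite ltn_neqAle firstm_le andbT; apply/eqP.
case: (bitn x (2 * firstm x) + bitn x (2 * firstm x + 1) == 0)%N.
  by rewrite ifN ?eqxx //; apply/negP => /eqP; lia.
rewrite ifN; last by apply/negP => /eqP; lia.
by rewrite ifN //; apply/negP => /eqP; lia.
Qed.

Lemma DLB_ge (x : bits) : ~~ odd n -> (2 * firstm x <= DLB x)%N.
Proof.
move=> ho; rewrite /DLB /zb /= -/M; case: (firstm x =P M) => [->|_]; first by rewrite [X in (_ <= X)%N](n2M ho).
by case: ifP => _; lia.
Qed.

Lemma DLB_le (x : bits) : (firstm x < M)%N -> (DLB x <= 2 * firstm x + 1)%N.
Proof.
move=> h; rewrite /DLB /zb /= -/M ifN; last by rewrite neq_ltn h.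
by case: ifP => _; lia.
Qed.


Definition C k (y : bits) := [forall i : 'I_n, (i < 2 * k)%N ==> y i].

Lemma C_bit k y p : (p < 2 * k)%N -> (2 * k <= n)%N -> C k y -> bitn y p.
Proof.
move=> hp hk /forallP hC; have hpn : (p < n)%N by lia.
by rewrite -[p]/(val (Ordinal hpn)) bitn_ord; have := hC (Ordinal hpn); rewrite /= hp.
Qed.

Lemma C_F k y : (k <= M)%N -> ~~ odd n -> C k y -> (k <= firstm y)%N.
Proof.
move=> hk ho hC; rewrite leqNgt; apply/negP => hF.
have := firstm_at (leq_trans hF hk); rewrite /blk_ones.
have hn := n2M ho.
by rewrite !(C_bit _ _ hC) //; lia.
Qed.

Definition clr j (y : bits) : bits :=
  [ffun i : 'I_n => if (val i == 2 * j) || (val i == 2 * j + 1) then false else y i].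

Lemma bitn_clr j y p : bitn (clr j y) p =
  if (p == 2 * j) || (p == 2 * j + 1) then false else bitn y p.
Proof.
rewrite /bitn; case: insubP => [u _ <-|_]; first by rewrite ffunE.
by case: ifP.
Qed.

Lemma sum_bool (P Q : pred bits) :
  (\sum_(y | P y) (Q y : nat) = #|[pred y | P y && Q y]|)%N.
Proof.
rewrite -sum1_card [RHS](eq_bigl (fun y => P y && Q y)); last by move=> y; rewrite !inE.
by rewrite big_mkcondr /=; apply: eq_bigr => y _; case: (Q y).
Qed.

Lemma count_inj k j : ~~ odd n -> (k <= j)%N -> (j < M)%N ->
  (#|[pred y | C k y && (j < firstm y)%N]| <=
   #|[pred y | C k y && ((firstm y == j) && zb y j)]|)%N.
Proof.
move=> ho hkj hjM; have hn := n2M ho.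
set D := [pred y | _ && _]; set E := [pred y | _ && _].
have hinj : {in D &, injective (clr j)}.
  move=> y1 y2; rewrite !inE => /andP [_ h1] /andP [_ h2] e.
  apply/ffunP => i; have := congr1 (fun f : bits => f i) e; rewrite !ffunE.
  case: ifP => // hi _.
  have b1 := firstm_before h1; have b2 := firstm_before h2.
  move: b1 b2; rewrite /blk_ones -!(bitn_ord _ i).
  by case/orP: hi => /eqP ->; [move=> /andP [-> _] /andP [-> _] | move=> /andP [_ ->] /andP [_ ->]].
rewrite -(card_in_imset hinj); apply: subset_leq_card; apply/subsetP => _ /imsetP [y hy ->].
move: hy; rewrite !inE => /andP [hC hjF].
have hF : firstm (clr j y) = j.
  apply: firstm_eq; first exact: ltnW.
    move=> l hl; rewrite /blk_ones !bitn_clr.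
    rewrite !ifN; try (apply/negP; case/orP => /eqP; lia).
    by apply: firstm_before; lia.
  by move=> _; rewrite /blk_ones !bitn_clr !eqxx /= ?orbT.
rewrite hF eqxx /zb !bitn_clr !eqxx /= ?orbT ?andbT.
apply/forallP => i; apply/implyP => hi; rewrite ffunE ifN; first by move/forallP: hC => /(_ i); rewrite hi.
by apply/negP; case/orP => /eqP /= ?; lia.
Qed.


Definition mix (y : bits) := ((firstm y < M)%N && ~~ zb y (firstm y)).

Lemma sum_lt k F : (k <= F)%N -> (F <= M)%N ->
  (\sum_(k <= j < M) (j < F)%N : nat)%N = (F - k)%N.
Proof.
move=> h1 h2; rewrite (big_cat_nat h1 h2) /=.
rewrite (eq_big_nat _ _ (F2 := fun _ => 1%N)); last by move=> j /andP [_ ->].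
rewrite [X in (_ + X)%N](eq_big_nat _ _ (F2 := fun _ => 0%N)); last first.
  by move=> j /andP [hj _]; rewrite ltnNge hj.
by rewrite !sum_nat_const_nat muln0 muln1 addn0.
Qed.

Lemma sum_eq1 k y : (\sum_(k <= j < M) ((firstm y == j) && zb y j) : nat)%N
   <= ((firstm y < M)%N && zb y (firstm y)).
Proof.
rewrite (eq_bigr (fun j => if j == firstm y then (zb y (firstm y) : nat) else 0%N)); last first.
  by move=> j _; rewrite eq_sym; case: eqP => [->|].
rewrite -big_mkcond big_nat1_eq; case: ifP => [/andP [_ ->]|] //.
Qed.

Lemma sumC_bound k : ~~ odd n -> (k <= M)%N ->
  (\sum_(y | C k y) (firstm y + mix y) <= \sum_(y | C k y) (k + 1))%N.
Proof.
move=> ho hk.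
have e1 : (\sum_(y | C k y) (firstm y + mix y) =
   \sum_(y | C k y) k + \sum_(k <= j < M) \sum_(y | C k y) (j < firstm y)%N
   + \sum_(y | C k y) mix y)%N.
  rewrite [X in (_ + X + _)%N]exchange_big /= -!big_split /=.
  apply: eq_bigr => y hy; rewrite sum_lt ?firstm_le ?C_F //.
  by have := C_F hk ho hy; lia.
have e2 : (\sum_(k <= j < M) \sum_(y | C k y) (j < firstm y)%N <=
   \sum_(k <= j < M) \sum_(y | C k y) ((firstm y == j) && zb y j))%N.
  rewrite big_nat [X in (_ <= X)%N]big_nat; apply: leq_sum => j /andP [h1 h2].
  by rewrite !sum_bool; apply: count_inj.
have e3 : (\sum_(k <= j < M) \sum_(y | C k y) ((firstm y == j) && zb y j) <=
   \sum_(y | C k y) ((firstm y < M)%N && zb y (firstm y)))%N.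
  rewrite exchange_big /=.
  by apply: leq_sum => y _; apply: sum_eq1.
rewrite e1 big_split /= -addnA leq_add2l.
apply: leq_trans (leq_add (leq_trans e2 e3) (leqnn _)) _.
rewrite -big_split /=; apply: leq_sum => y _.
by rewrite /mix; case: (firstm y < M)%N; case: (zb y (firstm y)).
Qed.


Lemma HLB_mix (R : realFieldType) (d : R) y : ~~ odd n -> (0 <= d)%R ->
  (HLB d y <= (2 * (firstm y + mix y))%N%:R)%R.
Proof.
move=> ho hd; rewrite (HLB_F _ _ ho) /mix; have hn := n2M ho.
case: (firstm y =P M) => [->|hF].
  by rewrite ltnn /= addn0 -hn.
have hlt : (firstm y < M)%N by rewrite ltn_neqAle firstm_le andbT; apply/eqP.
rewrite hlt /=; case: (zb y (firstm y)) => /=; first by rewrite addn0.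
have -> : (2 * (firstm y + 1) = 2 * firstm y + 2)%N by lia.
lra.
Qed.


Lemma sumHLB (R : realFieldType) (d : R) k : ~~ odd n -> (0 <= d)%R -> (k <= M)%N ->
  (\sum_(y | C k y) HLB d y <= \sum_(y | C k y) (2 * k + 2)%N%:R)%R.
Proof.
move=> ho hd hk.
apply: (@le_trans _ _ (\sum_(y | C k y) (2 * (firstm y + mix y))%N%:R)%R).
  by apply: ler_sum => y _; apply: HLB_mix.
rewrite -!natr_sum ler_nat.
rewrite [X in (_ <= X)%N](eq_bigr (fun y => 2 * (k + 1))%N); last by move=> y _; lia.
rewrite -!big_distrr /= leq_mul2l /=.
exact: sumC_bound.
Qed.


Definition Sp b (r : bits) := bitn r b && [forall i : 'I_n, (i < b)%N ==> ~~ r i].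

Lemma permb_inj (s : 'S_n) : injective (permb s).
Proof.
move=> x y e; apply/ffunP => j; have := congr1 (fun f : bits => f (s^-1 j)%g) e.
by rewrite !ffunE permKV.
Qed.

Lemma sum_perm (R : realFieldType) (f : bits -> R) (s : 'S_n) (P : pred bits) :
  (forall r, f (permb s r) = f r) ->
  (\sum_(r | P r) f r = \sum_(r | P (permb s r)) f r)%R.
Proof.
move=> hf; rewrite (reindex_inj (@permb_inj s)); apply: eq_bigr => r _; exact: hf.
Qed.

Lemma Pbound (R : realFieldType) (f : bits -> R) b : (b < n)%N -> (n <= 2 * b)%N ->
  (forall r, 0 <= f r)%R -> (\sum_r f r = 1)%R -> (forall s r, f (permb s r) = f r) ->
  (\sum_(r | Sp b r) f r <= 1 / n%:R)%R.
Proof.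
move=> hb hnb hf0 hf1 hfp.
have n0 : (0 < n)%N by lia.
pose rot (c j : 'I_n) : 'I_n := Ordinal (ltn_pmod (j + c) n0).
have rot_inj c : injective (rot c).
  move=> j1 j2 /(congr1 val) /= /eqP; rewrite eqn_modDr !modn_small // => /eqP h.
  exact: val_inj.
pose s c := perm (rot_inj c).
have sv c j : val (s c j) = ((j + c) %% n)%N by rewrite /s permE.
pose b0 := Ordinal hb.
have hS c r : Sp b (permb (s c) r) = r (s c b0) && [forall i : 'I_n, (i < b)%N ==> ~~ r (s c i)].
  rewrite /Sp -[b]/(val b0) bitn_perm; congr (_ && _).
  by apply: eq_forallb => i; rewrite ffunE.
have disj r c1 c2 : c1 != c2 -> ~~ (Sp b (permb (s c1) r) && Sp b (permb (s c2) r)).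
  wlog lt12 : c1 c2 / (c1 < c2)%N.
    move=> wl ne; case: (ltngtP c1 c2) => h; first exact: wl.
      by rewrite andbC wl // eq_sym.
    by move: ne; rewrite (val_inj h) eqxx.
  move=> _; rewrite !hS; apply/negP => /andP [/andP [r1 /forallP a1] /andP [r2 /forallP a2]].
  have hc2 : (c2 < n)%N by [].
  case: (leqP (c2 - c1) b) => hd.
    have hz : (b - (c2 - c1) < n)%N by lia.
    pose z := Ordinal hz.
    have e : s c2 z = s c1 b0 by apply: val_inj; rewrite !sv /=; congr (_ %% _)%N; lia.
    by move: (a2 z); rewrite e r1 implybF /= => /negP; apply; lia.
  have hz : (b + (c2 - c1) - n < n)%N by lia.
  pose z := Ordinal hz.
  have e : s c1 z = s c2 b0.
    apply: val_inj; rewrite !sv /=.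
    have -> : (b + c2 = (b + (c2 - c1) - n + c1) + n)%N by lia.
    by rewrite modnDr.
  by move: (a1 z); rewrite e r2 implybF /= => /negP; apply; lia.
have key c : (\sum_(r | Sp b r) f r = \sum_r (if Sp b (permb (s c) r) then f r else 0))%R.
  by rewrite (sum_perm _ (hfp (s c))) big_mkcond.
have hn : (0 < n%:R :> R)%R by rewrite ltr0n.
rewrite ler_pdivlMr // mulrC.
have -> : (n%:R * \sum_(r | Sp b r) f r = \sum_(c : 'I_n) \sum_(r | Sp b r) f r)%R.
  by rewrite sumr_const card_ord mulr_natl.
rewrite (eq_bigr _ (fun c _ => key c)) exchange_big /= -hf1; apply: ler_sum => r _.
case: (pickP (fun c => Sp b (permb (s c) r))) => [c0 hc0|none].
  rewrite (bigD1 c0) //= hc0 big1 ?addr0 // => c hc.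
  have := disj r c c0 hc; rewrite hc0 andbT => /negbTE ->; done.
by rewrite big1 // => c _; rewrite none.
Qed.


Lemma DLB_m (y : bits) m : firstm y = m -> (m < M)%N ->
  DLB y = if zb y m then (2 * m + 1)%N else (2 * m)%N.
Proof. by move=> hF hm; rewrite /DLB /= -/M hF ifN // neq_ltn hm. Qed.

Lemma blk_bit (y : bits) l p : blk_ones y l -> (p %/ 2 = l)%N -> bitn y p.
Proof.
move=> /andP [h1 h2] hp; have : (p = 2 * l \/ p = 2 * l + 1)%N by lia.
by case=> ->.
Qed.

Section Point.
Variables (R : realFieldType) (d : R) (m a b : nat) (x : bits).
Hypothesis ho : ~~ odd n.
Hypothesis hm : (m < M)%N.
Hypothesis hab : ((a == 2 * m) && (b == 2 * m + 1)) || ((a == 2 * m + 1) && (b == 2 * m)).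
Hypothesis hA : forall p, (p < 2 * m)%N -> bitn x p.
Hypothesis ha : bitn x a.
Hypothesis hb : ~~ bitn x b.

Definition A0 (r : bits) := [forall i : 'I_n, (i < 2 * m)%N ==> ~~ r i].
Definition Sa (r : bits) := bitn r a && ~~ bitn r b && A0 r.
Definition Sb (r : bits) := bitn r b && ~~ bitn r a && A0 r.

Lemma blk_ab (y : bits) : blk_ones y m = bitn y a && bitn y b.
Proof. by rewrite /blk_ones; case/orP: hab => /andP [/eqP -> /eqP ->] //; rewrite andbC. Qed.

Lemma zb_ab (y : bits) : zb y m = ~~ bitn y a && ~~ bitn y b.
Proof.
rewrite /zb; case/orP: hab => /andP [/eqP -> /eqP ->];
  by case: (bitn y (2 * m)); case: (bitn y (2 * m + 1)).
Qed.

Lemma firstm_m (y : bits) : (forall p, (p < 2 * m)%N -> bitn y p) -> ~~ blk_ones y m -> firstm y = m.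
Proof.
move=> hy hbl; apply: firstm_eq; [exact: ltnW| |by []].
by move=> l hl; rewrite /blk_ones !hy //; lia.
Qed.

Lemma Fx : firstm x = m.
Proof. by apply: firstm_m => //; rewrite blk_ab (negbTE hb) andbF. Qed.

Lemma zbx : zb x m = false.
Proof. by rewrite zb_ab ha. Qed.

Lemma DLBx : DLB x = (2 * m)%N.
Proof. by rewrite (DLB_m Fx hm) zbx. Qed.

Lemma HLBx : HLB d x = ((2 * m + 2)%N%:R - d)%R.
Proof.
rewrite (HLB_F _ _ ho) Fx ifN ?zbx //; last by rewrite neq_ltn hm.
Qed.

Lemma Ypoint r :
  ((HLB d (xorb_ff x r) - HLB d x) * (DLB x <= DLB (xorb_ff x r))%N%:R <=
   (if Sb r then HLB d (xorb_ff x r) - ((2 * m + 2)%N%:R - d) else 0) +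
   (if Sa r then d - 2 else 0))%R.
Proof.
set y := xorb_ff x r.
have hn := n2M ho.
rewrite DLBx /Sa /Sb.
case hr: (A0 r); last first.
  rewrite !andbF addr0.
  move/negbT: hr; rewrite /A0 negb_forall => /existsP [i].
  rewrite negb_imply negbK => /andP [hi ri].
  have yi : bitn y i = false by rewrite bitn_xor !bitn_ord ri -(bitn_ord x i) hA.
  have hF : (firstm y <= i %/ 2)%N.
    rewrite leqNgt; apply/negP => /firstm_before /blk_bit /(_ (erefl _)).
    by rewrite yi.
  have hFM : (firstm y < M)%N by lia.
  have := DLB_le hFM; rewrite leqNgt => hD.
  have -> : (2 * m <= DLB y)%N = false by apply/negbTE; apply/negP => h; lia.
  by rewrite mulr0.
have hy : forall p, (p < 2 * m)%N -> bitn y p.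
  move=> p hp; have hpn : (p < n)%N by lia.
  rewrite bitn_xor hA // -[p]/(val (Ordinal hpn)) bitn_ord.
  by move/forallP: hr => /(_ (Ordinal hpn)); rewrite /= hp /= => /negbTE ->.
rewrite !andbT.
have ya : bitn y a = ~~ bitn r a by rewrite bitn_xor ha.
have yb : bitn y b = bitn r b by rewrite bitn_xor (negbTE hb).
case ra: (bitn r a); case rb: (bitn r b) => /=.
- have hF : firstm y = m by apply: firstm_m => //; rewrite blk_ab ya yb ra ?rb.
  rewrite (DLB_m hF hm) zb_ab ya yb ra rb /= leqnn.
  rewrite HLBx (HLB_F _ _ ho) hF ifN ?zb_ab ?ya ?yb ?ra ?rb //; last by rewrite neq_ltn hm.
  by rewrite subrr mul0r addr0.
- have hF : firstm y = m by apply: firstm_m => //; rewrite blk_ab ya yb ra ?rb.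
  rewrite (DLB_m hF hm) zb_ab ya yb ra rb /= leq_addr mulr1 add0r.
  rewrite HLBx (HLB_F _ _ ho) hF ifN ?zb_ab ?ya ?yb ?ra ?rb //; last by rewrite neq_ltn hm.
  rewrite natrD; lra.
- have hF : (m < firstm y)%N.
    rewrite ltnNge; apply/negP => hle.
    have := firstm_at (leq_ltn_trans hle hm).
    case: (ltngtP (firstm y) m) hle => // [hlt|->] _.
      by rewrite /blk_ones !hy //; lia.
    by rewrite blk_ab ya yb ra rb.
  have := DLB_ge y ho => hD.
  have -> : (2 * m <= DLB y)%N by lia.
  by rewrite mulr1 addr0 HLBx.
- have hF : firstm y = m by apply: firstm_m => //; rewrite blk_ab ya yb ra ?rb.
  rewrite (DLB_m hF hm) zb_ab ya yb ra rb /= leqnn.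
  rewrite HLBx (HLB_F _ _ ho) hF ifN ?zb_ab ?ya ?yb ?ra ?rb //; last by rewrite neq_ltn hm.
  by rewrite subrr mul0r addr0.
Qed.

End Point.


Definition E m (x z : bits) := [forall i : 'I_n, (i < 2 * m + 2)%N ==> (z i == x i)].

Lemma xorK (y r : bits) : xorb_ff (xorb_ff y r) r = y.
Proof. by apply/ffunP => i; rewrite !ffunE -addbA addbb addbF. Qed.

Lemma xor_inj (r : bits) : injective (fun y => xorb_ff y r).
Proof. by move=> y1 y2 /= e; rewrite -(xorK y1 r) e xorK. Qed.

Lemma DLB_2m (z : bits) m : ~~ odd n -> (m < M)%N -> DLB z = (2 * m)%N ->
  firstm z = m /\ (bitn z (2 * m) != bitn z (2 * m + 1)).
Proof.
move=> ho hm; have hn := n2M ho.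
rewrite /DLB /= -/M; case: (firstm z =P M) => [_ /eqP|hF]; first by lia.
have hlt : (firstm z < M)%N by rewrite ltn_neqAle firstm_le andbT; apply/eqP.
case: ifP => hz; first by move/eqP; lia.
move/eqP; rewrite eqn_pmul2l // => /eqP hm'; split => //.
have := firstm_at hlt; rewrite /blk_ones hm'; move: hz; rewrite hm'.
by case: (bitn z (2 * m)); case: (bitn z (2 * m + 1)).
Qed.

Lemma E_bit m x z p : E m x z -> (p < 2 * m + 2)%N -> bitn x p = bitn z p.
Proof.
move=> /forallP he hp; case: (ltnP p n) => hpn; last by rewrite !bitn_out.
rewrite -[p]/(val (Ordinal hpn)) !bitn_ord.
by have := he (Ordinal hpn); rewrite /= hp /= => /eqP.
Qed.

Lemma reindexE (R : realFieldType) (G : bits -> R) m a b (z r : bits) :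
  ((a == 2 * m) && (b == 2 * m + 1)) || ((a == 2 * m + 1) && (b == 2 * m)) ->
  (forall p, (p < 2 * m)%N -> bitn z p) -> bitn z a -> ~~ bitn z b -> Sb m a b r ->
  (\sum_(x | E m x z) G (xorb_ff x r) = \sum_(y | C m.+1 y) G y)%R.
Proof.
move=> hab hzA hza hzb /andP [/andP [rb ra] /forallP r0].
rewrite [RHS](reindex_inj (@xor_inj r)) /=; apply: eq_bigl => x.
rewrite /C /E; apply: eq_forallb => i.
have -> : (i < 2 * m.+1)%N = (i < 2 * m + 2)%N by rewrite mulnS addnC.
case hi: (i < 2 * m + 2)%N => //=.
rewrite ffunE.
have : r i = ~~ z i.
  case: (ltnP i (2 * m)) => h.
    by have := r0 i; rewrite h /= => /negbTE ->; rewrite -bitn_ord hzA.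
  have : (nat_of_ord i = a \/ nat_of_ord i = b).
    by case/orP: hab => /andP [/eqP -> /eqP ->]; lia.
  by case=> e; rewrite -!bitn_ord e ?(negbTE ra) ?(negbTE hzb) ?hza ?rb.
move=> ->; by case: (x i); case: (z i).
Qed.


Lemma per_z (R : realFieldType) (d : R) m (f : bits -> R) (z : bits) :
  ~~ odd n -> (n <= 4 * m)%N -> (m < M)%N -> (0 <= d)%R ->
  (forall r, 0 <= f r)%R -> (\sum_r f r = 1)%R -> (forall s r, f (permb s r) = f r) ->
  DLB z = (2 * m)%N ->
  (\sum_(x | E m x z) \sum_r f r *
      ((HLB d (xorb_ff x r) - HLB d x) * (DLB x <= DLB (xorb_ff x r))%N%:R)
     <= (\sum_(x | E m x z) 1) * (2 * d / n%:R))%R.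
Proof.
move=> ho h4 hm hd hf0 hf1 hfp hDz.
have hn := n2M ho.
have [hFz hne] := DLB_2m ho hm hDz.
pose a := if bitn z (2 * m) then (2 * m)%N else (2 * m + 1)%N.
pose b := if bitn z (2 * m) then (2 * m + 1)%N else (2 * m)%N.
have hab : ((a == 2 * m) && (b == 2 * m + 1)) || ((a == 2 * m + 1) && (b == 2 * m)).
  by rewrite /a /b; case: (bitn z (2 * m)); rewrite !eqxx ?orbT.
have hza : bitn z a.
  by move: hne; rewrite /a; case e: (bitn z (2 * m)) => //=; case: (bitn z (2 * m + 1)).
have hzb : ~~ bitn z b.
  by move: hne; rewrite /b; case e: (bitn z (2 * m)) => //=; rewrite e; case: (bitn z (2 * m + 1)).
have ha2 : (2 * m <= a < 2 * m + 2)%N by case/orP: hab => /andP [/eqP -> _]; lia.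
have hb2 : (2 * m <= b < 2 * m + 2)%N by case/orP: hab => /andP [_ /eqP ->]; lia.
have hab' : a != b by case/orP: hab => /andP [/eqP -> /eqP ->]; apply/eqP; lia.
have hzA : forall p, (p < 2 * m)%N -> bitn z p.
  move=> p hp; apply: (@blk_bit z (p %/ 2)) => //; apply: firstm_before; rewrite hFz; lia.
have hx x : E m x z -> [/\ forall p, (p < 2 * m)%N -> bitn x p, bitn x a & ~~ bitn x b].
  move=> he; rewrite !(E_bit he) ?hza ?hzb; try lia; split=> // p hp.
  by rewrite (E_bit he) ?hzA //; lia.
pose c0 := ((2 * m + 2)%N%:R - d)%R.
pose N := (\sum_(x | E m x z) (1 : R))%R.
pose H := (\sum_(y | C m.+1 y) HLB d y)%R.
pose Pb := (\sum_(r | Sb m a b r) f r)%R.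
apply: (@le_trans _ _ (\sum_(x | E m x z) \sum_r f r *
   ((if Sb m a b r then HLB d (xorb_ff x r) - c0 else 0) +
    (if Sa m a b r then d - 2 else 0)))%R).
  apply: ler_sum => x hxz; apply: ler_sum => r _; apply: ler_wpM2l => //.
  by have [hA ha hb] := hx x hxz; apply: Ypoint.
rewrite exchange_big /=.
have step2 r : (\sum_(x | E m x z) f r *
   ((if Sb m a b r then HLB d (xorb_ff x r) - c0 else 0) +
    (if Sa m a b r then d - 2 else 0)) =
   f r * ((if Sb m a b r then H - N * c0 else 0) + (if Sa m a b r then N * (d - 2) else 0)))%R.
  rewrite -mulr_sumr big_split /=; congr (_ * (_ + _))%R.
    case hs: (Sb m a b r); last by rewrite big1.
    rewrite sumrB (reindexE (HLB d) hab hzA hza hzb hs) /N mulr_suml; congr (_ - _)%R.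
    by apply: eq_bigr => x _; rewrite mul1r.
  case: (Sa m a b r); last by rewrite big1.
  by rewrite /N mulr_suml; apply: eq_bigr => x _; rewrite mul1r.
under eq_bigr => r _ do rewrite step2.
have sumS (S : pred bits) K :
    (\sum_r f r * (if S r then K else 0) = (\sum_(r | S r) f r) * K)%R.
  rewrite mulr_suml [RHS]big_mkcond /=; apply: eq_bigr => r _.
  by case: (S r); rewrite ?mulr0 ?mul0r.
rewrite (eq_bigr (fun r => f r * (if Sb m a b r then H - N * c0 else 0) +
                            f r * (if Sa m a b r then N * (d - 2) else 0))%R); last first.
  by move=> r _; rewrite mulrDr.
rewrite big_split /= !sumS.
have an : (a < n)%N by lia.
have bn : (b < n)%N by lia.
pose a0 := Ordinal an; pose b0 := Ordinal bn.
have hPab : (\sum_(r | Sa m a b r) f r = Pb)%R.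
  rewrite (sum_perm _ (hfp (tperm a0 b0))); apply: eq_bigl => r.
  rewrite /Sa /Sb.
  have -> : bitn (permb (tperm a0 b0) r) a = bitn r b.
    by rewrite -[a]/(val a0) bitn_perm tpermL -(bitn_ord r b0).
  have -> : bitn (permb (tperm a0 b0) r) b = bitn r a.
    by rewrite -[b]/(val b0) bitn_perm tpermR -(bitn_ord r a0).
  rewrite andbC [RHS]andbC; congr (_ && _).
  rewrite /A0; apply: eq_forallb => i; rewrite ffunE.
  case hi: (i < 2 * m)%N => //=; rewrite tpermD //; apply/eqP => /(congr1 val) /=; lia.
rewrite hPab -mulrDr.
have hPb0 : (0 <= Pb)%R by apply: sumr_ge0.
have hPb1 : (Pb <= 1 / n%:R)%R.
  apply: le_trans (Pbound bn _ hf0 hf1 hfp); last by lia.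
  rewrite /Pb [X in (_ <= X)%R]big_mkcond [X in (X <= _)%R]big_mkcond /=; apply: ler_sum => r _.
  case hs: (Sb m a b r); last by case: (Sp b r).
  suff -> : Sp b r by [].
  move: hs; rewrite /Sb /Sp /A0 => /andP [/andP [-> ra] /forallP r0] /=.
  apply/forallP => i; apply/implyP => hi.
  case: (ltnP i (2 * m)) => h; first by have := r0 i; rewrite h.
  have ei : nat_of_ord i = a by case/orP: hab => /andP [/eqP ea /eqP eb]; lia.
  by rewrite -(bitn_ord r i) ei.
pose r0 : bits := [ffun i : 'I_n => nat_of_ord i == b].
have hr0 : Sb m a b r0.
  rewrite /Sb -[b]/(val b0) -[a]/(val a0) !bitn_ord !ffunE /= eqxx /= (negbTE hab') /=.
  apply/forallP => i; apply/implyP => hi; rewrite ffunE; apply/eqP; lia.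
have hNC : (\sum_(y | C m.+1 y) (1 : R) = N)%R.
  by rewrite /N -(reindexE (fun _ => 1%R : R) hab hzA hza hzb hr0).
have hH : (H <= N * (2 * m.+1 + 2)%N%:R)%R.
  apply: (@le_trans _ _ (\sum_(y | C m.+1 y) ((2 * m.+1 + 2)%N%:R : R))%R).
    by apply: sumHLB.
  by rewrite -hNC mulr_suml; apply: ler_sum => y _; rewrite mul1r.
have hN0 : (0 <= N)%R by apply: sumr_ge0.
apply: (@le_trans _ _ (Pb * (2 * d * N))%R).
  apply: ler_wpM2l => //.
  move: hH; rewrite /c0 (_ : (2 * m.+1 + 2 = (2 * m + 2) + 2)%N); last by lia.
  rewrite natrD => hH; nra.
apply: (@le_trans _ _ ((1 / n%:R) * (2 * d * N))%R).
  by apply: ler_wpM2r => //; nra.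
by rewrite (_ : (1 / n%:R * (2 * d * N) = N * (2 * d / n%:R))%R) //; ring.
Qed.

End Bits.

Unset Implicit Arguments.
Local Open Scope ring_scope.

Theorem lemma7 (R : realFieldType) (n m : nat) (delta : R)
  (px : {ffun 'I_n -> bool} -> R) (V : {ffun 'I_n -> bool} -> {ffun 'I_n -> bool} -> R) :
  (0 < n)%N -> ~~ odd n ->
  (n <= 4 * m)%N -> (m < n./2)%N ->
  0 < delta -> delta < 2 ->
  (* px is a probability mass function of x *)
  (forall x, 0 <= px x) -> \sum_(x : {ffun 'I_n -> bool}) px x = 1 ->
  (* DLB(x) = 2m almost surely *)
  (forall x, px x != 0 -> DLB x = (2 * m)%N) ->
  (* bits x_i, i in [2m+3..n] (0-indexed: i >= 2m+2), are i.i.d. uniform and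
     independent of the remaining bits *)
  (forall x, px x = (2%:R ^- (n - (2 * m + 2))) *
       \sum_(z : {ffun 'I_n -> bool} | [forall i : 'I_n, ((i < 2 * m + 2)%N) ==> (z i == x i)]) px z) ->
  unary_unbiased V ->
  \sum_(x : {ffun 'I_n -> bool}) px x * \sum_(y : {ffun 'I_n -> bool}) V x y *
      ((HLB delta y - HLB delta x) * (DLB x <= DLB y)%N%:R)
    <= 2 * delta / n%:R.
Proof.
move=> n0 ho h4 hmM hd0 hd2 hp0 hp1 hD hU [hV0 hV1 hVx hVp].
pose zero : {ffun 'I_n -> bool} := [ffun => false].
pose f r := V zero r.
have hf0 r : 0 <= f r by apply: hV0.
have hf1 : \sum_r f r = 1 by apply: hV1.
have hfp s r : f (permb s r) = f r.
  rewrite /f [RHS](hVp s); congr V; by apply/ffunP => i; rewrite !ffunE.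
have hVf x y : V x y = f (xorb_ff y x).
  rewrite (hVx x y x) /f; congr V; by apply/ffunP => i; rewrite !ffunE addbb.
pose Y (x y : {ffun 'I_n -> bool}) := (HLB delta y - HLB delta x) * (DLB x <= DLB y)%N%:R.
have hPhi (x : {ffun 'I_n -> bool}) : \sum_y V x y * Y x y = \sum_r f r * Y x (xorb_ff x r).
  have inj : injective (xorb_ff x).
    by move=> r1 r2 e; apply/ffunP => i; have := congr1 (fun g : {ffun 'I_n -> bool} => g i) e;
       rewrite !ffunE => /addbI.
  rewrite (reindex_inj inj); apply: eq_bigr => r _; rewrite hVf; congr (f _ * _).
  by apply/ffunP => i; rewrite !ffunE addbC addKb.
pose c : R := 2%:R ^- (n - (2 * m + 2)).
have hc0 : 0 <= c by rewrite /c invr_ge0 exprn_ge0 // ler0n.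
pose Nz (z : {ffun 'I_n -> bool}) := \sum_(x | E m x z) (1 : R).
have hE (x z : {ffun 'I_n -> bool}) : E m x z -> forall w, E m x w = E m z w.
  move=> /forallP he w; apply: eq_forallb => i.
  by case hi: (i < 2 * m + 2)%N => //=; have := he i; rewrite hi /= => /eqP ->.
have hEs (x z : {ffun 'I_n -> bool}) : E m x z = E m z x.
  by apply: eq_forallb => i; rewrite eq_sym.
have hcN (z : {ffun 'I_n -> bool}) : px z != 0 -> c * Nz z = 1.
  move=> nz.
  pose Sz := \sum_(w | E m z w) px w.
  have hz : px z = c * Sz by rewrite hU.
  have e1 : Sz = \sum_(x | E m x z) c * Sz.
    rewrite /Sz (eq_bigl (fun x => E m x z)); last by move=> x; rewrite hEs.
    apply: eq_bigr => x hx; rewrite hU; congr (_ * _).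
    by apply: eq_bigl => w; exact: (etrans (hE x z hx w) (hEs z w)).
  have e2 : Sz * (c * Nz z - 1) = 0.
    rewrite mulrBr mulr1 {2}e1 /Nz mulr_sumr mulr_sumr -sumrB big1 // => x _.
    by rewrite mulr1 mulrC subrr.
  move/eqP: e2; rewrite mulf_eq0 => /orP [/eqP hS|]; first by move: nz; rewrite hz hS mulr0 eqxx.
  by rewrite subr_eq0 => /eqP.
have hm : (m < M n)%N by [].
rewrite (eq_bigr (fun x => c * ((\sum_(z | E m x z) px z) * \sum_y V x y * Y x y))); last first.
  by move=> x _; rewrite {1}hU mulrA.
rewrite -mulr_sumr.
have -> : \sum_x (\sum_(z | E m x z) px z) * \sum_y V x y * Y x y =
          \sum_z px z * \sum_(x | E m x z) \sum_r f r * Y x (xorb_ff x r).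
  under eq_bigr => x _ do rewrite mulr_suml big_mkcond /=.
  rewrite exchange_big /=; apply: eq_bigr => z _.
  rewrite mulr_sumr [RHS]big_mkcond /=; apply: eq_bigr => x _.
  by case: (E m x z); rewrite ?hPhi ?mul0r.
apply: (@le_trans _ _ (c * \sum_z px z * (Nz z * (2 * delta / n%:R)))).
  apply: ler_wpM2l => //; apply: ler_sum => z _.
  case: (px z =P 0) => [->|/eqP nz]; first by rewrite !mul0r.
  apply: ler_wpM2l => //; apply: per_z => //; [exact: ltW | exact: hD].
rewrite mulr_sumr (eq_bigr (fun z => px z * (2 * delta / n%:R))); last first.
  move=> z _; case: (px z =P 0) => [->|/eqP nz]; first by rewrite !mul0r mulr0.
  by rewrite mulrCA (mulrA c) hcN // mul1r.
by rewrite -mulr_suml hp1 mul1r.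
Qed.
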